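(* Let $k\in\mathbb{N}$ and $t\in(0,1)$, and let $A_{\infty,k,t}$ be the matrix defined in the context, with first row $(a_0,a_1,a_2,\ldots)$. Then, as identities of formal Laurent/power series in $s$ (equivalently, of convergent series for $|s|$ small and positive), $$\mathcal S(A_{\infty,k,t})(s)=\frac{1+ts}{s\bigl(1+(1-t)\sum_{j=1}^{k+1}(-s)^j\bigr)},\qquad \mathcal D(A_{\infty,k,t})(s,\lambda)=\frac{1+(1-t)\sum_{j=1}^{k+1}s^j}{1+s(\lambda-t)+\lambda(1-t)\sum_{j=2}^{k+2}s^j}.$$
   Context: For $x\in\mathbb R$, $x_+=\max\{x,0\}$. For $k\in\mathbb N$ and $t\in(0,1)$, $A_{\infty,k,t}=(A(i,j))_{i,j\ge1}$ is the infinite Toeplitz Hessenberg matrix with $A(i,j)=a_{j-i}$ for $j\ge i$, $A(i+1,i)=1$, and $A(i,j)=0$ for $i\ge j+2$, where the sequence $(a_0,a_1,\ldots)$ is the unique one for which the leading principal minors satisfy $d_n:=\det A(\{1,\dots,n\})=t^{(n-k-1)_+}$ for all $n\in\mathbb N$ (uniqueness holds because, via Laplace expansion along the first row, $d_n=\sum_{j=1}^n(-1)^{j-1}a_{j-1}d_{n-j}$ with $d_0=1$, a triangular system in the $a_j$). For an infinite Toeplitz matrix $T=(\tau(i-j))_{i,j}$, its symbol is the Laurent series $\mathcal S(T)(s)=\sum_{j=-\infty}^{\infty}\tau(-j)s^j$ (so here $\mathcal S(A_{\infty,k,t})(s)=s^{-1}+\sum_{m\ge0}a_ms^m$), and $\mathcal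 D(T)(s,\lambda)=\sum_{j\ge0}D_j(\lambda)s^j$ with $D_0=1$ and $D_j(\lambda)=\det(T(\{1,\dots,j\})-\lambda I_j)$ for $j\ge1$, where $T(\{1,\dots,j\})$ is the leading principal $j\times j$ submatrix. *)

(* Defs.v *)
From mathcomp Require Import all_boot all_order all_algebra.
Set Implicit Arguments. Unset Strict Implicit. Unset Printing Implicit Defensive.
Import Order.TTheory GRing.Theory Num.Theory.
Local Open Scope ring_scope.

(* Leading principal n x n submatrix of the infinite Toeplitz Hessenberg matrix
   with first row (a_0, a_1, ...): entry (i,j) (0-based) is a_{j-i} for j >= i,
   1 for i = j+1, and 0 for i >= j+2. *)
Definition hessA (R : ringType) (a : nat -> R) (n : nat) : 'M[R]_n :=
  \matrix_(i < n, j < n)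
    (if (i <= j)%N then a (j - i)%N else if i == j.+1 :> nat then 1 else 0).

(* Coefficients of s * S(A)(s) where S(A)(s) = s^{-1} + sum_{m>=0} a_m s^m:
   coefficient 0 is 1 and coefficient m+1 is a_m. *)
Definition sym_shift (R : ringType) (a : nat -> R) (n : nat) : R :=
  if n is m.+1 then a m else 1.

Definition Dcoef (R : comRingType) (a : nat -> R) (lam : R) (j : nat) : R :=
  if j is j'.+1 then \det (hessA a j'.+1 - lam%:M) else 1.

Definition cauchy (R : ringType) (c : nat -> R) (p : {poly R}) (n : nat) : R :=
  \sum_(i < n.+1) c i * p`_(n - i).

(* Main.v *)
Require Import Defs.
From mathcomp Require Import all_boot all_order all_algebra.
From mathcomp Require Import ring zify.
Import Order.TTheory GRing.Theory Num.Theory.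
Local Open Scope ring_scope.
Set Implicit Arguments. Unset Strict Implicit.

Section Det.
Variable (R : comRingType) (a : nat -> R).

Definition hent (i j : nat) : R :=
  if (i <= j)%N then a (j - i)%N else if i == j.+1 then 1 else 0.

Definition Hm (b : nat -> R) (n : nat) : 'M[R]_n :=
  \matrix_(i < n, j < n) (if i == 0 :> nat then b j else hent i j).

Lemma hessA_Hm n : hessA a n = Hm a n.
Proof.
apply/matrixP=> i j; rewrite !mxE /hent.
by case: i => [[|i]] //= _; rewrite subn0.
Qed.

Lemma detH n : forall b, \det (Hm b n.+1) =
  \sum_(j < n.+1) (-1) ^+ j * b j * \det (hessA a (n - j)).
Proof.
elim: n => [|n IH] b.
  by rewrite det_mx11 big_ord1 !mxE /= subnn det_mx00 expr0 mul1r; apply: esym; apply: mulr1.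
rewrite (expand_det_col _ ord0) big_ord_recl big_ord_recl.
rewrite big1; last first.
  move=> i _; rewrite !mxE /= /hent /bump /=.
  by rewrite mul0r.
rewrite addr0 /cofactor.
have -> : row' ord0 (col' ord0 (Hm b n.+2)) = hessA a n.+1.
  by apply/matrixP=> i j; rewrite !mxE /= /hent /bump /=.
have -> : row' (lift ord0 ord0) (col' ord0 (Hm b n.+2)) = Hm (fun j => b j.+1) n.+1.
  apply/matrixP=> i j; rewrite !mxE /= /hent /bump /=.
  by case: i => [[|i]] //.
rewrite IH [RHS]big_ord_recl !mxE /= /hent /bump /= subn0 expr0 expr1 !mul1r.
congr (_ + _); rewrite mulr_sumr; apply: eq_bigr => i _.
by rewrite add1n subSS exprS !mulrA.
Qed.

Lemma rec_m n : \sum_(i < n.+1) ((-1) ^+ i * sym_shift a i) * \det (hessA a (n - i))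
  = (n == 0)%:R.
Proof.
case: n => [|n].
  by rewrite big_ord1 /= det_mx00 expr0 !mul1r.
rewrite big_ord_recl /= subn0 expr0 !mul1r hessA_Hm detH /=.
rewrite -[RHS](subrr (\sum_(j < n.+1) (-1) ^+ j * a j * \det (hessA a (n - j)))).
rewrite -sumrN; congr (_ + _); apply: eq_bigr => i _.
by rewrite /bump /= !add1n add0n subSS exprS !mulNr !mul1r.
Qed.

Lemma rec_p n : \sum_(i < n.+1) sym_shift a i * ((-1) ^+ (n - i) * \det (hessA a (n - i)))
  = (n == 0)%:R.
Proof.
have h := rec_m n.
transitivity ((-1) ^+ n * (n == 0)%:R : R); last first.
  by case: (n) => [|m] /=; rewrite ?expr0 ?mul1r ?mulr0.
rewrite -h mulr_sumr; apply: eq_bigr => i _.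
have hi : (i <= n)%N by rewrite -ltnS ltn_ord.
have e : (-1) ^+ n = (-1) ^+ i * (-1) ^+ (n - i) :> R by rewrite -exprD subnKC.
have vv : (-1) ^+ i * (-1) ^+ i = 1 :> R.
  by rewrite -exprD addnn -mul2n exprM sqrrN !expr1n.
rewrite e.
set v := (-1) ^+ i; set u := (-1) ^+ (n - i).
set L := sym_shift a i * _.
have -> : L = v * v * L by rewrite vv mul1r.
rewrite /L; ring.
Qed.
End Det.


Section Poly.
Variable R : comRingType.

Definition tr (N : nat) (x : nat -> R) : {poly R} := \poly_(i < N) x i.
Record eqN (N : nat) (p q : {poly R}) : Prop :=
  EqN { eqNP : forall i, (i < N)%N -> p`_i = q`_i }.

Lemma eqN_refl N p : eqN N p p. Proof. by constructor. Qed.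
Lemma eqN_sym N p q : eqN N p q -> eqN N q p.
Proof. by case=> h; constructor=> i hi; rewrite h. Qed.
Lemma eqN_trans N p q r : eqN N p q -> eqN N q r -> eqN N p r.
Proof. by case=> h1 [h2]; constructor=> i hi; rewrite h1 ?h2. Qed.
Lemma eqN_add N p p' q q' : eqN N p p' -> eqN N q q' -> eqN N (p + q) (p' + q').
Proof. by case=> h1 [h2]; constructor=> i hi; rewrite !coefD h1 ?h2. Qed.
Lemma eqN_mul N p p' q q' : eqN N p p' -> eqN N q q' -> eqN N (p * q) (p' * q').
Proof.
case=> h1 [h2]; constructor=> i hi; rewrite !coefM; apply: eq_bigr => j _.
have hj : (j < N)%N by exact: leq_trans (ltn_ord j) hi.
have hj' : (i - j < N)%N by apply: leq_ltn_trans (leq_subr j i) hi.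
by rewrite h1 // h2.
Qed.

Lemma cauchy_tr N c p n : (n < N)%N -> cauchy c p n = (tr N c * p)`_n.
Proof.
move=> hn; rewrite /cauchy coefM; apply: eq_bigr => j _.
rewrite coef_poly; case: ifP => // /negbT; rewrite -leqNgt => hj.
have : (j < N)%N by exact: leq_trans (ltn_ord j) hn.
by rewrite ltnNge hj.
Qed.

Lemma coef_trM N x y n : (n < N)%N ->
  (tr N x * tr N y)`_n = \sum_(i < n.+1) x i * y (n - i)%N.
Proof.
move=> hn; rewrite -cauchy_tr //; apply: eq_bigr => j _.
by rewrite coef_poly (leq_ltn_trans (leq_subr j n) hn).
Qed.

Lemma coef_tr N x n : (n < N)%N -> (tr N x)`_n = x n.
Proof. by move=> hn; rewrite coef_poly hn. Qed.

Lemma sum_delta (f : nat -> R) m i n :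
  \sum_(m <= j < n) f j * (i == j)%:R = if (m <= i < n)%N then f i else 0.
Proof.
elim: n => [|n IH]; first by rewrite big_geq // ltn0 andbF.
case: (leqP m n) => hmn.
  rewrite big_nat_recr //= IH.
  case: (eqVneq i n) => [->|hin] /=.
    by rewrite ltnn andbF hmn ltnS leqnn mulr1 add0r.
  by rewrite mulr0 addr0 ltnS (leq_eqVlt i n) (negbTE hin).
rewrite big_geq //; case: (leqP m i) => //= hmi.
by rewrite ltnS leqNgt (leq_trans hmn hmi).
Qed.

Lemma coef_sumX (f : nat -> R) m n i :
  (\sum_(m <= j < n) f j *: 'X^j)`_i = if (m <= i < n)%N then f i else 0.
Proof.
rewrite coef_sum -sum_delta; apply: eq_bigr => j _.
by rewrite coefZ coefXn.
Qed.

End Poly.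

Section Coefs.
Variables (R : comRingType) (k : nat) (t : R).

Definition Qp : {poly R} := 1 + (1 - t) *: \sum_(1 <= j < k.+2) 'X ^+ j.
Definition Qm : {poly R} := 1 + (1 - t) *: \sum_(1 <= j < k.+2) (- 'X) ^+ j.

Lemma coef_sumX1 m n i :
  (\sum_(m <= j < n) 'X ^+ j : {poly R})`_i = if (m <= i < n)%N then 1 else 0.
Proof.
rewrite -(coef_sumX (fun _ => 1 : R)).
have -> : \sum_(m <= j < n) (1 : R) *: 'X^j = \sum_(m <= j < n) 'X^j :> {poly R}.
  by apply: eq_bigr => j _; rewrite scale1r.
by [].
Qed.

Lemma coef_Qp i : Qp`_i = (i == 0)%:R + (1 - t) * (if (1 <= i < k.+2)%N then 1 else 0).
Proof. by rewrite /Qp coefD coef1 coefZ coef_sumX1. Qed.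

Lemma coef_Qm i : Qm`_i =
  (i == 0)%:R + (1 - t) * (if (1 <= i < k.+2)%N then (-1) ^+ i else 0).
Proof.
rewrite /Qm; have -> : \sum_(1 <= j < k.+2) (- 'X) ^+ j =
    \sum_(1 <= j < k.+2) ((-1) ^+ j : R) *: 'X^j :> {poly R}.
  apply: eq_bigr => j _.
  by rewrite -mul_polyC polyC_exp polyCN polyC1 [LHS]exprNn.
by rewrite coefD coef1 coefZ coef_sumX.
Qed.

Lemma tr_dQp (d : nat -> R) (hd : forall i, d i = t ^+ (i - k.+1)) N :
  eqN N ((1 - t *: 'X) * tr N d) Qp.
Proof.
constructor=> i hi; rewrite mulrBl mul1r coefB -scalerAl coefZ coefXM coef_Qp coef_tr //.
case: i hi => [|j] hj /=.
  by rewrite hd sub0n expr0 !mulr0 subr0 addr0.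
rewrite coef_tr; last by apply: ltnW.
rewrite !hd add0r ltnS.
case: (leqP j k) => hjk.
  have -> : (j.+1 - k.+1 = 0)%N by apply/eqP; rewrite subn_eq0.
  have -> : (j - k.+1 = 0)%N by apply/eqP; rewrite subn_eq0; apply: leqW.
  rewrite (_ : (j < k.+1)%N = true) ?ltnS // !expr0; ring.
have -> : (j.+1 - k.+1 = (j - k.+1).+1)%N by lia.
rewrite ltnNge hjk /= exprS; ring.
Qed.

Lemma tr_eQm (d : nat -> R) (hd : forall i, d i = t ^+ (i - k.+1)) N :
  eqN N ((1 + t *: 'X) * tr N (fun i => (-1) ^+ i * d i)) Qm.
Proof.
constructor=> i hi; rewrite mulrDl mul1r coefD -scalerAl coefZ coefXM coef_Qm coef_tr //.
case: i hi => [|j] hj /=.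
  by rewrite hd sub0n !expr0 !mulr0 !addr0 mul1r.
rewrite coef_tr; last by apply: ltnW.
rewrite !hd add0r ltnS.
case: (leqP j k) => hjk.
  have -> : (j.+1 - k.+1 = 0)%N by apply/eqP; rewrite subn_eq0.
  have -> : (j - k.+1 = 0)%N by apply/eqP; rewrite subn_eq0; apply: leqW.
  rewrite (_ : (j < k.+1)%N = true) ?ltnS // !expr0 exprS; ring.
have -> : (j.+1 - k.+1 = (j - k.+1).+1)%N by lia.
rewrite ltnNge hjk /= !exprS; ring.
Qed.

End Coefs.

Lemma cauchy_ext (R : ringType) (c c' : nat -> R) p n :
  (forall j, c j = c' j) -> cauchy c p n = cauchy c' p n.
Proof. by move=> h; apply: eq_bigr => j _; rewrite h. Qed.

Theorem proposition1 (R : realFieldType) (k : nat) (t : R)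
    (ht0 : 0 < t) (ht1 : t < 1) (a : nat -> R)
    (hminors : forall n : nat, (0 < n)%N ->
        \det (hessA a n) = t ^+ (n - k.+1)%N) :
  (forall n : nat,
     cauchy (sym_shift a)
       (1 + (1 - t) *: \sum_(1 <= j < k.+2) (- 'X) ^+ j) n
     = (1 + t *: 'X : {poly R})`_n)
  /\
  (forall (lam : R) (n : nat),
     cauchy (Dcoef a lam)
       (1 + (lam - t) *: 'X + (lam * (1 - t)) *: \sum_(2 <= j < k.+3) 'X ^+ j) n
     = (1 + (1 - t) *: \sum_(1 <= j < k.+2) 'X ^+ j : {poly R})`_n).
Proof.
have hdet : forall i, \det (hessA a i) = t ^+ (i - k.+1).
  by case=> [|i]; [rewrite det_mx00 sub0n expr0 | apply: hminors].
have h1 : forall N, eqN N (tr N (fun i => (-1) ^+ i * sym_shift a i) *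
                          tr N (fun i => \det (hessA a i))) 1.
  by move=> N; constructor=> i hi; rewrite coef_trM // coef1 -(rec_m a i).
split.
  move=> n.
  rewrite (cauchy_tr _ _ (ltnSn n)).
  set N := n.+1.
  have -> : (1 + (1 - t) *: \sum_(1 <= j < k.+2) (- 'X) ^+ j) = Qm k t by [].
  have h5 : eqN N (tr N (sym_shift a) * tr N (fun i => (-1) ^+ i * \det (hessA a i))) 1.
    by constructor=> i hi; rewrite coef_trM // coef1 -(rec_p a i).
  have h6 := tr_eQm hdet N.
  have : eqN N (tr N (sym_shift a) * Qm k t) ((1 + t *: 'X) * 1).
    apply: eqN_trans (eqN_mul (eqN_refl N (tr N (sym_shift a))) (eqN_sym h6)) _.
    by rewrite mulrCA; apply: eqN_mul (eqN_refl _ _) h5.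
  by rewrite mulr1 => -[] /(_ n (ltnSn n)).
move=> lam n.
pose a' := fun j => if j is 0 then a 0%N - lam else a j.
have hD : forall j, Dcoef a lam j = \det (hessA a' j).
  case=> [|j] /=; first by rewrite det_mx00.
  congr (\det _); apply/matrixP => i l; rewrite !mxE.
  case: (eqVneq i l) => [->|hne]; first by rewrite leqnn subnn mulr1n.
  rewrite mulr0n subr0.
  case: leqP => h //.
  have hlt : (0 < l - i)%N.
    rewrite subn_gt0 ltn_neqAle h andbT.
    by apply: contra hne => /eqP hv; apply/eqP; apply: val_inj.
  by move: hlt; case: (l - i)%N.
rewrite (cauchy_ext _ _ hD) (cauchy_tr _ _ (ltnSn n)).
set N := n.+1.
have -> : (1 + (1 - t) *: \sum_(1 <= j < k.+2) 'X ^+ j) = Qp k t by [].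
have hW : (1 + (lam - t) *: 'X + (lam * (1 - t)) *: \sum_(2 <= j < k.+3) 'X ^+ j)
    = 1 - t *: 'X + lam *: ('X * Qp k t).
  apply/polyP => i.
  rewrite !(coefD, coefB, coefN, coefZ, coef1, coefX, coefXM, coef_Qp, coef_sumX1).
  by case: i => [|[|i]] /=; rewrite ?ltnS; ring.
rewrite hW.
have h2 : eqN N (tr N (fun i => (-1) ^+ i * sym_shift a' i) *
                 tr N (fun i => \det (hessA a' i))) 1.
  by constructor=> i hi; rewrite coef_trM // coef1 -(rec_m a' i).
have h3 : eqN N (tr N (fun i => (-1) ^+ i * sym_shift a' i))
                (tr N (fun i => (-1) ^+ i * sym_shift a i) + lam *: 'X).
  constructor=> i hi; rewrite coefD coefZ coefX !coef_tr //.
  by case: i hi => [|[|i]] hi /=; rewrite ?expr0 ?expr1; ring.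
have h4 := tr_dQp hdet N.
have s1 : eqN N (Qp k t * tr N (fun i => (-1) ^+ i * sym_shift a i)) (1 - t *: 'X).
  apply: eqN_trans (eqN_mul (eqN_sym h4) (eqN_refl _ _)) _.
  rewrite -mulrA [tr N (fun i => \det _) * _]mulrC.
  rewrite -[X in eqN _ _ X]mulr1.
  exact: eqN_mul (eqN_refl _ _) (h1 N).
have s2 : eqN N (Qp k t * tr N (fun i => (-1) ^+ i * sym_shift a' i))
             (1 - t *: 'X + lam *: ('X * Qp k t)).
  apply: eqN_trans (eqN_mul (eqN_refl _ (Qp k t)) h3) _.
  rewrite mulrDr; apply: eqN_add s1 _.
  rewrite [Qp k t * _]mulrC scalerAl; exact: eqN_refl.
have : eqN N (Qp k t) (tr N (fun j => \det (hessA a' j)) * (1 - t *: 'X + lam *: ('X * Qp k t))).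
  apply: eqN_trans (_ : eqN N (Qp k t) (Qp k t * (tr N (fun i => (-1) ^+ i * sym_shift a' i) *
                 tr N (fun i => \det (hessA a' i))))) _.
    rewrite -[X in eqN _ X _]mulr1; exact: eqN_mul (eqN_refl _ _) (eqN_sym h2).
  rewrite mulrA mulrC; exact: eqN_mul (eqN_refl _ _) s2.
by case=> /(_ n (ltnSn n)).
Qed.
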